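(* Let $f\colon X\to X$ be a homeomorphism of a metric space $X$ and $\mu$ a Borel probability measure inner-distal with respect to $f$. If $f$ is asymptotically expansive, then $\mu$ is positively meagre-expansive. If $f$ is bi-asymptotically expansive, then $\mu$ is meagre-expansive.
   Context: $\mathcal{P}(x)=\{y\colon \inf_{n\in\mathbb{Z}} d(f^n(x),f^n(y))=0\}$; $\mu$ is inner-distal if $\mu(\operatorname{Int}\mathcal{P}(x))=0$ for all $x$. $f$ is asymptotically expansive if there is $\delta>0$ such that $d(f^n(x),f^n(y))\le\delta$ for all $n\ge0$ implies $\lim_{n\to\infty}d(f^n(x),f^n(y))=0$; $f$ is bi-asymptotically expansive if $f$ and $f^{-1}$ are asymptotically expansive. $\Gamma^+_\delta(x)=\{y\colon d(f^n(x),f^n(y))\le\delta\ \forall n\ge0\}$ and $\Gamma_\delta(x)=\{y\colon d(f^n(x),f^n(y))\le\delta\ \forall n\in\mathbb{Z}\}$. $\mu$ is positively meagre-expansive (resp. meagre-expansive) if there is $\delta>0$ with $\mu(\operatorname{Int}\Gamma^+_\delta(x))=0$ (resp. $\mu(\operatorname{Int}\Gamma_\delta(x))=0$) for all $x\in X$. *)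

(* Defs.v *)
From HB Require Import structures.
From mathcomp Require Import all_boot all_order all_algebra.
From mathcomp Require Import all_classical all_reals all_analysis.
Set Implicit Arguments. Unset Strict Implicit. Unset Printing Implicit Defensive.
Import Order.TTheory GRing.Theory Num.Theory.
Local Open Scope classical_set_scope.
Local Open Scope ring_scope.

(* A metric space with a distinguished point (needed only because
   MathComp-Analysis measurable types are pointed; a space carrying a
   probability measure is nonempty anyway). *)
#[short(type="pointedMetricType")]
HB.structure Definition PointedMetric (K : numDomainType) :=
  { T of Pointed T & Metric K T }.

Section Defs.
Context {R : realType} {X : pointedMetricType R}.

Definition borel_type := g_sigma_algebraType (@open X).

Variables (f g : X -> X). (* g is the inverse of the homeomorphism f *)

Definition iterz (n : int) : X -> X :=
  match n with
  | Posz k => iter k f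
  | Negz k => iter k.+1 g
  end.

Let d := @mdist R X.

Definition Pset (x : X) : set X :=
  [set y | inf (range (fun n : int => d (iterz n x) (iterz n y))) = 0].

Definition Gamma_plus (delta : R) (x : X) : set X :=
  [set y | forall n : nat, d (iter n f x) (iter n f y) <= delta].

Definition Gamma (delta : R) (x : X) : set X :=
  [set y | forall n : int, d (iterz n x) (iterz n y) <= delta].

Definition inner_distal (mu : set borel_type -> \bar R) : Prop :=
  forall x : X, mu (interior (Pset x)) = 0%E.

Definition positively_meagre_expansive (mu : set borel_type -> \bar R) : Prop :=
  exists2 delta : R, 0 < delta &
    forall x : X, mu (interior (Gamma_plus delta x)) = 0%E.

Definition meagre_expansive (mu : set borel_type -> \bar R) : Prop :=
  exists2 delta : R, 0 < delta &
    forall x : X, mu (interior (Gamma delta x)) = 0%E.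

End Defs.

Definition asymptotically_expansive {R : realType} {X : pointedMetricType R}
    (h : X -> X) : Prop :=
  exists2 delta : R, 0 < delta &
    forall x y : X,
      (forall n : nat, mdist (iter n h x) (iter n h y) <= delta) ->
      (fun n : nat => mdist (iter n h x) (iter n h y)) @ \oo --> (0 : R^o).

(* f bi-asymptotically expansive, g being the inverse of f *)
Definition bi_asymptotically_expansive {R : realType} {X : pointedMetricType R}
    (f g : X -> X) : Prop :=
  asymptotically_expansive f /\ asymptotically_expansive g.

(* Main.v *)
Require Import Defs.
From HB Require Import structures.
From mathcomp Require Import all_boot all_order all_algebra.
From mathcomp Require Import all_classical all_reals all_analysis.
Import Order.TTheory GRing.Theory Num.Theory.
Local Open Scope classical_set_scope.
Local Open Scope ring_scope.

Lemma inf_range0 (R : realType) (I : Type) (i0 : I) (h : I -> R) :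
  (forall i, 0 <= h i) -> (forall e : R, 0 < e -> exists i, h i < e) ->
  inf (range h) = 0.
Proof.
move=> h0 he; have ne : range h !=set0 by exists (h i0), i0.
have lb : lbound (range h) 0 by move=> _ [i _ <-].
apply/eqP; rewrite eq_le; apply/andP; split; last first.
  exact: lb_le_inf.
rewrite leNgt; apply/negP => infp.
have [i hi] := he _ infp.
have hr : range h (h i) by exists i.
have := ge_inf (ex_intro _ 0 lb) hr.
by rewrite leNgt hi.
Qed.

Lemma open_meas (R : realType) (X : pointedMetricType R) (A : set X) :
  open A -> measurable (A : set (borel_type (X := X))).
Proof. by move=> oA; apply: sub_sigma_algebra. Qed.

Theorem lemma3p6 (R : realType) (X : pointedMetricType R) (f g : X -> X)
  (f_cont : continuous f) (g_cont : continuous g)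
  (fgK : cancel f g) (gfK : cancel g f)
  (mu : probability (borel_type (X := X)) R) :
  inner_distal f g mu ->
  (asymptotically_expansive f -> positively_meagre_expansive f mu) /\
  (bi_asymptotically_expansive f g -> meagre_expansive f g mu).
Proof.
move=> idist.
have key : forall delta, 0 < delta ->
  (forall x y : X,
      (forall n : nat, mdist (iter n f x) (iter n f y) <= delta) ->
      (fun n : nat => mdist (iter n f x) (iter n f y)) @ \oo --> (0 : R^o)) ->
  forall x, Gamma_plus f delta x `<=` Pset f g x.
  move=> delta dp H x y Hy; rewrite /Pset /=.
  rewrite /Pset/=. apply: (@inf_range0 R int 0 (fun i => mdist (iterz f g i x) (iterz f g i y))).
    by move=> n; exact: mdist_ge0.
  move=> e ep; have := H x y Hy => /cvgrPdist_lt /(_ e ep) [N _ HN].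
  exists (Posz N); have := HN N (leqnn N).
  by rewrite /= sub0r normrN ger0_norm // mdist_ge0.
have meas0 : forall A x, A `<=` Pset f g x -> mu (interior A) = 0%E.
  move=> A x AP; apply/eqP; rewrite eq_le measure_ge0 andbT.
  have m1 : measurable (interior A : set (borel_type (X := X))).
    by apply: open_meas; exact: open_interior.
  have m2 : measurable (interior (Pset f g x) : set (borel_type (X := X))).
    by apply: open_meas; exact: open_interior.
  rewrite -(idist x); apply: (le_measure mu); rewrite ?inE //.
  exact: interiorS.
split.
  move=> [delta dp H]; exists delta => // x.
  exact: (meas0 _ x (key _ dp H x)).
move=> [[delta dp H] _]; exists delta => // x.
apply: (meas0 _ x); apply: subset_trans (key _ dp H x).
by move=> y Hy n; exact: (Hy (Posz n)).
Qed.
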